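(* Let $M,N\ge 0$. For every two elements $u<w$ of the poset of shuffles $W_{MN}$ and every $i\ge 0$, there is a bijection between the set of elements of $[u,w]$ of rank $\rho(u)+i$ and the set of elements of $[u,w]$ of rank $\rho(w)-i$.
   Context: Let $\mathcal{A}=\{a_1,\dots,a_M\}$, $\mathcal{X}=\{x_1,\dots,x_N\}$ be disjoint sets. A shuffle word is a word (possibly empty) with distinct letters from $\mathcal{A}\cup\mathcal{X}$ in which the letters of each alphabet appear in increasing order of subscripts. $W_{MN}$ is the set of shuffle words ordered by the reflexive-transitive closure of: $w$ is covered by $w'$ iff $w'$ is obtained from $w$ by deleting a letter of $\mathcal{A}$ or inserting a letter of $\mathcal{X}$. Its rank function is $\rho(w)=(M-\#(\{w\}\cap\mathcal{A}))+\#(\{w\}\cap\mathcal{X})$, where $\{w\}$ is the set of letters of $w$. *)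

(* Defs.v *)
From mathcomp Require Import all_boot.
From Stdlib Require Import Relation_Operators.
Set Implicit Arguments. Unset Strict Implicit. Unset Printing Implicit Defensive.

(* Letters: inl a = a_{a+1} in alphabet A, inr x = x_{x+1} in alphabet X. *)
Definition letter (M N : nat) := ('I_M + 'I_N)%type.

Definition getA M N (l : letter M N) : option 'I_M :=
  if l is inl a then Some a else None.
Definition getX M N (l : letter M N) : option 'I_N :=
  if l is inr x then Some x else None.
Definition isA M N (l : letter M N) : bool := if l is inl _ then true else false.
Definition isX M N (l : letter M N) : bool := if l is inr _ then true else false.

Definition is_shuffle M N (w : seq (letter M N)) : bool :=
  [&& uniq w,
      sorted (fun a b : 'I_M => (a < b)%N) (pmap (@getA M N) w) &
      sorted (fun a b : 'I_N => (a < b)%N) (pmap (@getX M N) w)].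

Definition shuffle (M N : nat) := {w : seq (letter M N) | is_shuffle w}.

Definition covers M N (w w' : shuffle M N) : Prop :=
  (exists (w1 w2 : seq (letter M N)) (a : 'I_M),
      val w = w1 ++ inl a :: w2 /\ val w' = w1 ++ w2) \/
  (exists (w1 w2 : seq (letter M N)) (x : 'I_N),
      val w = w1 ++ w2 /\ val w' = w1 ++ inr x :: w2).

Definition wle M N : shuffle M N -> shuffle M N -> Prop :=
  clos_refl_trans (shuffle M N) (@covers M N).

Definition wlt M N (u w : shuffle M N) : Prop := wle u w /\ u <> w.

Definition rho M N (w : shuffle M N) : nat :=
  (M - count (@isA M N) (val w)) + count (@isX M N) (val w).

Definition in_interval M N (u w v : shuffle M N) : Prop := wle u v /\ wle v w.

(* Main.v *)
Require Import Defs.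
From mathcomp Require Import all_boot zify.
From Stdlib Require Import Lia Relation_Operators Operators_Properties ClassicalEpsilon ProofIrrelevance.
Set Implicit Arguments. Unset Strict Implicit. Unset Printing Implicit Defensive.

Lemma isAX M N (l : letter M N) : isA l = ~~ isX l.
Proof. by case: l. Qed.

Lemma pmapA_filter M N (s : seq (letter M N)) :
  pmap (@getA M N) s = pmap (@getA M N) (filter (@isA M N) s).
Proof. by elim: s => //= -[a|x] s ->. Qed.

Lemma pmapX_filter M N (s : seq (letter M N)) :
  pmap (@getX M N) s = pmap (@getX M N) (filter (@isX M N) s).
Proof. by elim: s => //= -[a|x] s ->. Qed.

Lemma uniq_AX M N (s : seq (letter M N)) :
  uniq (filter (@isA M N) s) -> uniq (filter (@isX M N) s) -> uniq s.
Proof.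
elim: s => //= l s IH; case: l => [a|x] /=.
- move=> /andP[Hn Hu] Hx; rewrite IH // andbT; apply: contra Hn => H.
  by rewrite mem_filter /=.
- move=> Ha /andP[Hn Hu]; rewrite IH // andbT; apply: contra Hn => H.
  by rewrite mem_filter /=.
Qed.

Lemma shuffle_of M N (z sa sx : seq (letter M N)) :
  is_shuffle sa -> is_shuffle sx ->
  filter (@isA M N) z = filter (@isA M N) sa ->
  filter (@isX M N) z = filter (@isX M N) sx -> is_shuffle z.
Proof.
move=> /and3P[ua sa1 _] /and3P[ux _ sx2] HA HX.
apply/and3P; split.
- by apply: uniq_AX; [rewrite HA | rewrite HX]; exact: filter_uniq.
- by rewrite pmapA_filter HA -pmapA_filter.
- by rewrite pmapX_filter HX -pmapX_filter.
Qed.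

Lemma pmap_subseq (T U : eqType) (f : T -> option U) s z :
  subseq s z -> subseq (pmap f s) (pmap f z).
Proof.
move/subseqP=> [m Hm ->]; elim: z m Hm => [|y z IH] [|b m] //= [Hm]; try by rewrite sub0seq.
have H1 := IH m Hm.
case: b; rewrite [mask _ _]/=.
  rewrite [pmap f (y :: _)]/=; case: (f y) => [a|]; cbn [oapp] => //.
  by rewrite -cat1s -[a :: pmap f z]cat1s subseq_cat2l.
case: (f y) => [a|]; cbn [oapp] => //.
apply: subseq_trans H1 _; exact: subseq_cons.
Qed.

Lemma shuffle_subseq M N (s z : seq (letter M N)) :
  is_shuffle z -> subseq s z -> is_shuffle s.
Proof.
move=> /and3P[uz sA sX] Hs; apply/and3P; split.
- exact: subseq_uniq Hs uz.
- apply: subseq_sorted (pmap_subseq _ Hs) sA; exact: ltn_trans.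
- apply: subseq_sorted (pmap_subseq _ Hs) sX; exact: ltn_trans.
Qed.

Lemma countA_le M N (s : seq (letter M N)) : is_shuffle s -> count (@isA M N) s <= M.
Proof.
move=> /and3P[_ sA _].
have -> : count (@isA M N) s = size (pmap (@getA M N) s).
  by rewrite size_pmap; apply: eq_count => -[].
have U : uniq (pmap (@getA M N) s).
  apply: sorted_uniq sA; [exact: ltn_trans | exact: ltnn].
by rewrite -(card_uniqP U); apply: leq_trans (max_card _) _; rewrite card_ord.
Qed.

Definition inS (T : eqType) (s : seq T) : pred T := fun l => l \in s.

Lemma filter_all_in (T : eqType) (s : seq T) : filter (inS s) s = s.
Proof. by apply/all_filterP/allP => x. Qed.

Lemma filter_split (T : eqType) (p : pred T) z s1 s2 :
  filter p z = s1 ++ s2 ->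
  exists z1 z2, [/\ z = z1 ++ z2, filter p z1 = s1 & filter p z2 = s2].
Proof.
elim: z s1 => [|y z IH] s1 /=.
  by case: s1 => //= <-; exists [::], [::].
case: ifP => py.
  case: s1 => [|y' s1] /=.
    by move=> H; exists [::], (y :: z); rewrite /= py.
  move=> [<- H]; have [z1 [z2 [-> H1 H2]]] := IH _ H.
  by exists (y :: z1), z2; rewrite /= py H1.
move=> H; have [z1 [z2 [-> H1 H2]]] := IH _ H.
by exists (y :: z1), z2; rewrite /= py H1.
Qed.

Definition Tw M N (u v w z : seq (letter M N)) :=
  [/\ filter (inS u) z = u, filter (inS v) z = v, filter (inS w) z = w &
      {in z, forall l, (isA l -> l \in u) /\ (isX l -> l \in w)}].

Lemma mem_of_filter (T : eqType) (p : pred T) z s l :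
  filter p z = s -> l \in s -> l \in z.
Proof. by move=> <-; rewrite mem_filter => /andP[]. Qed.

Lemma uniq_mid (T : eqType) (p s : seq T) a :
  uniq (p ++ a :: s) -> (a \notin p ++ s) && uniq (p ++ s).
Proof.
have P : perm_eq (p ++ [:: a] ++ s) ([:: a] ++ p ++ s) by rewrite perm_catCA perm_refl.
by rewrite -cat1s (perm_uniq P). Qed.

Lemma T_ext M N (u v : seq (letter M N)) (w1 w2 : shuffle M N) z :
  Tw u v (val w1) z -> covers w1 w2 -> exists z', Tw u v (val w2) z'.
Proof.
case: w1 w2 => [s1 Hs1] [s2 Hs2] /= [Hu Hv Hw Hf] [].
- move=> [p [s [a [/= E1 E2]]]]; subst s1 s2.
  have /andP[Hna _] := uniq_mid (proj1 (andP Hs1)).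
  exists z; split => //.
  + have -> : filter (inS (p ++ s)) z = filter (predC1 (inl a)) (filter (inS (p ++ inl a :: s)) z).
      rewrite -filter_predI; apply: eq_filter => l /=; rewrite /inS.
      case: (eqVneq l (inl a)) => [->|ne] /=; first by rewrite (negbTE Hna).
      by rewrite !mem_cat in_cons (negbTE ne).
    rewrite Hw filter_cat /= eqxx /=.
    move: Hna; rewrite mem_cat negb_or => /andP[Hp Hs].
    congr (_ ++ _); apply/all_filterP/allP => l /=.
      by move=> Hl; apply: contraNneq Hp => <-.
    by move=> Hl; apply: contraNneq Hs => <-.
  + move=> l Hl; have [H1 H2] := Hf l Hl; split => // Hx.
    move: (H2 Hx); rewrite !mem_cat in_cons; case: (eqVneq l (inl a)) => [E|] //.
    by rewrite E in Hx.
- move=> [p [s [x [/= E1 E2]]]]; subst s1 s2.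
  have /andP[Hnx _] := uniq_mid (proj1 (andP Hs2)).
  have [z1 [z2 [Ez H1 H2]]] := filter_split Hw.
  have Hxz : inr x \notin z.
    apply: contra Hnx => Hz; have [_ H] := Hf _ Hz; exact: H.
  have Hxu : inr x \notin u by apply: contra Hxz; apply: mem_of_filter Hu.
  have Hxv : inr x \notin v by apply: contra Hxz; apply: mem_of_filter Hv.
  exists (z1 ++ inr x :: z2); split.
  + by rewrite filter_cat /= {2}/inS (negbTE Hxu) -filter_cat -Ez.
  + by rewrite filter_cat /= {2}/inS (negbTE Hxv) -filter_cat -Ez.
  + have Heq : {in z, inS (p ++ inr x :: s) =1 inS (p ++ s)}.
      move=> l Hl; rewrite /inS !mem_cat in_cons.
      by case: (eqVneq l (inr x)) => [E|//]; by rewrite -E Hl in Hxz.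
    have E1 : filter (inS (p ++ inr x :: s)) z1 = p.
      rewrite -[RHS]H1; apply: eq_in_filter => l Hl; apply: Heq.
      by rewrite Ez mem_cat Hl.
    have E2 : filter (inS (p ++ inr x :: s)) z2 = s.
      rewrite -[RHS]H2; apply: eq_in_filter => l Hl; apply: Heq.
      by rewrite Ez mem_cat Hl orbT.
    by rewrite filter_cat /= E1 E2 /inS mem_cat mem_head orbT.
  + move=> l; rewrite mem_cat in_cons orbCA => /orP[/eqP->|Hl] //.
      by split=> // _; rewrite mem_cat mem_head orbT.
    have Hlz : l \in z by rewrite Ez mem_cat.
    have [A1 A2] := Hf l Hlz.
    split => // /A2; rewrite !mem_cat in_cons => /orP[->|->] //.
    by rewrite !orbT.
Qed.

Lemma wle_T M N (u v : shuffle M N) : wle u v -> exists z, Tw (val u) (val u) (val v) z.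
Proof.
move=> H; have {H}: clos_refl_trans_n1 _ (@covers M N) u v by apply: clos_rt_rtn1.
elim=> [|y w Hc _ [z Hz]].
  by exists (val u); split; rewrite ?filter_all_in.
exact: T_ext Hz Hc.
Qed.

Lemma wle_T3 M N (u v w : shuffle M N) : wle u v -> wle v w ->
  exists z, Tw (val u) (val v) (val w) z.
Proof.
move=> /wle_T [z0 [H1 _ H3 H4]] H.
have {H}: clos_refl_trans_n1 _ (@covers M N) v w by apply: clos_rt_rtn1.
elim=> [|y w' Hc _ [z Hz]].
  by exists z0; split.
exact: T_ext Hz Hc.
Qed.

Lemma wle_sub M N (s t : shuffle M N) : wle s t ->
  (forall l, l \in val t -> isA l -> l \in val s) /\
  (forall l, l \in val s -> isX l -> l \in val t).
Proof.
move=> /wle_T [z [H1 _ H3 H4]]; split => l Hl.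
  by have [] := H4 l (mem_of_filter H3 Hl).
by have [] := H4 l (mem_of_filter H1 Hl).
Qed.

Lemma mem_split (T : eqType) (s : seq T) l : l \in s -> exists p r, s = p ++ l :: r.
Proof. by case/splitPr=> p r; exists p, r. Qed.

Lemma has_split (T : eqType) (a : pred T) (s : seq T) :
  has a s -> exists p l r, [/\ s = p ++ l :: r, l \in s & a l].
Proof.
move/hasP=> [l Hl al]; have [p [r E]] := mem_split Hl.
by exists p, l, r; split.
Qed.

Lemma del_wle M N n (s c : shuffle M N) (q : pred (letter M N)) :
  size (val s) <= n -> {in val s, forall l, ~~ q l -> isA l} ->
  val c = filter q (val s) -> wle s c.
Proof.
elim: n s => [|n IH] s Hn Hq Hc.
  move: Hn; rewrite leqn0 => /nilP E.
  have -> : c = s by apply: val_inj; rewrite Hc E.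
  exact: rt_refl.
case: (boolP (has (predC q) (val s))) => H.
  have [p [l [r [E Hl ql]]]] := has_split H.
  have Hs1 : is_shuffle (p ++ r).
    apply: shuffle_subseq (valP s) _; rewrite E.
    by apply: cat_subseq (subseq_refl p) (subseq_cons r l).
  pose s1 : shuffle M N := exist _ (p ++ r) Hs1.
  apply: (@rt_trans _ _ _ s1).
    apply: rt_step; left.
    move: (Hq l Hl ql); case: l E {Hl ql} => [a|//] E _.
    by exists p, r, a.
  apply: IH => /=.
  - by move: Hn; rewrite E size_cat /= size_cat addnS ltnS.
  - by move=> l' Hl'; apply: Hq; rewrite E mem_cat in_cons orbCA -mem_cat Hl' orbT.
  - by rewrite Hc E !filter_cat /= (negbTE ql).
have -> : c = s.
  apply: val_inj; rewrite Hc; apply/all_filterP/allP => l Hl.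
  by apply: contraR H => ql; apply/hasP; exists l.
exact: rt_refl.
Qed.

Lemma ins_wle M N n (t c : shuffle M N) (p : pred (letter M N)) :
  size (val t) <= n -> {in val t, forall l, ~~ p l -> isX l} ->
  val c = filter p (val t) -> wle c t.
Proof.
elim: n t => [|n IH] t Hn Hq Hc.
  move: Hn; rewrite leqn0 => /nilP E.
  have -> : c = t by apply: val_inj; rewrite Hc E.
  exact: rt_refl.
case: (boolP (has (predC p) (val t))) => H.
  have [pr [l [r [E Hl ql]]]] := has_split H.
  have Hs1 : is_shuffle (pr ++ r).
    apply: shuffle_subseq (valP t) _; rewrite E.
    by apply: cat_subseq (subseq_refl pr) (subseq_cons r l).
  pose t1 : shuffle M N := exist _ (pr ++ r) Hs1.
  apply: (@rt_trans _ _ _ t1).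
    apply: IH => /=.
    - by move: Hn; rewrite E size_cat /= size_cat addnS ltnS.
    - by move=> l' Hl'; apply: Hq; rewrite E mem_cat in_cons orbCA -mem_cat Hl' orbT.
    - by rewrite Hc E !filter_cat /= (negbTE ql).
  apply: rt_step; right.
  move: (Hq l Hl ql); case: l E {Hl ql} => [//|x] E _.
  by exists pr, r, x.
have -> : c = t.
  apply: val_inj; rewrite Hc; apply/all_filterP/allP => l Hl.
  by apply: contraR H => ql; apply/hasP; exists l.
exact: rt_refl.
Qed.

Lemma wle_of_filters M N (s t : shuffle M N) (z : seq (letter M N)) (p q : pred (letter M N)) :
  val s = filter p z -> val t = filter q z ->
  {in z, forall l, p l -> ~~ q l -> isA l} ->
  {in z, forall l, q l -> ~~ p l -> isX l} -> wle s t.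
Proof.
move=> Es Et H1 H2.
have Hc : is_shuffle (filter q (val s)).
  apply: shuffle_subseq (valP s) _; exact: filter_subseq.
pose c : shuffle M N := exist _ (filter q (val s)) Hc.
apply: (@rt_trans _ _ _ c).
  apply: (@del_wle _ _ (size (val s))) => //= l; rewrite Es mem_filter => /andP[pl lz].
  exact: H1.
apply: (@ins_wle _ _ (size (val t)) _ _ p) => //=.
  by move=> l; rewrite Et mem_filter => /andP[ql lz]; apply: H2.
rewrite Es Et -!filter_predI; apply: eq_filter => l /=; exact: andbC.
Qed.

Definition swp M N (pu pw pS : pred (letter M N)) (x y : letter M N) :=
  [&& isX x, isA y, ~~ pu x, ~~ pw y & ~~ (pS x && pS y)].

Definition canon M N (pu pw pS : pred (letter M N)) (z : seq (letter M N)) :=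
  sorted (fun x y => ~~ swp pu pw pS x y) z.

Lemma sorted_adj (T : eqType) (r : rel T) z :
  sorted r z -> forall p x y s, z = p ++ x :: y :: s -> r x y.
Proof.
move=> Hz p; elim: p z Hz => [|h p IH] z Hz x y s E.
  by move: Hz; rewrite E /= => /andP[].
move: Hz; rewrite E /= => Hp; apply: (IH (p ++ x :: y :: s)) => //.
exact: path_sorted Hp.
Qed.

Lemma adj_sorted (T : eqType) (r : rel T) z :
  (forall p x y s, z = p ++ x :: y :: s -> r x y) -> sorted r z.
Proof.
elim: z => [//|a [//|b t] IH] H /=.
rewrite (H [::] a b t) //=.
apply: (IH) => p x y s E; apply: (H (a :: p)); by rewrite E.
Qed.

Lemma not_sorted_adj (T : eqType) (r : rel T) z :
  ~~ sorted r z -> exists p x y s, z = p ++ x :: y :: s /\ ~~ r x y.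
Proof.
elim: z => [//|a [//|b t] IH] /=.
case Hab: (r a b) => /= H.
  have [p [x [y [s [E Hr]]]]] := IH H.
  by exists (a :: p), x, y, s; rewrite E.
by exists [::], a, b, t; rewrite Hab.
Qed.

Fixpoint invc M N (s : seq (letter M N)) : nat :=
  if s is l :: t then isX l * count (@isA M N) t + invc t else 0.

Lemma inv_swap M N (p s : seq (letter M N)) x y : isX x -> isA y ->
  invc (p ++ y :: x :: s) < invc (p ++ x :: y :: s).
Proof.
move=> Hx Hy; elim: p => [|h p IH] /=.
  have ey : isX y = false by rewrite -[isX y]negbK -isAX Hy.
  have ex : isA x = false by rewrite isAX Hx.
  rewrite Hx Hy ey ex /=; lia.
have -> : count (@isA M N) (p ++ y :: x :: s) = count (@isA M N) (p ++ x :: y :: s).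
  rewrite !count_cat /=; lia.
by rewrite ltn_add2l.
Qed.

Lemma filter_swap (T : eqType) (a : pred T) p s x y : ~~ (a x && a y) ->
  filter a (p ++ x :: y :: s) = filter a (p ++ y :: x :: s).
Proof. by rewrite !filter_cat /=; case: (a x); case: (a y). Qed.

Lemma normalize M N (pu pw pS : pred (letter M N)) n (z : seq (letter M N)) :
  invc z <= n ->
  exists z', [/\ perm_eq z z',
    (forall a : pred (letter M N), (forall x y, swp pu pw pS x y -> ~~ (a x && a y)) ->
       filter a z' = filter a z) & canon pu pw pS z'].
Proof.
elim: n z => [|n IH] z Hn.
  case: (boolP (canon pu pw pS z)) => Hc; first by exists z; split.
  have [p [x [y [s [E Hr]]]]] := not_sorted_adj Hc.
  move: Hr; rewrite negbK => /and5P[Hx Hy _ _ _].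
  by move: Hn; rewrite leqn0 E => /eqP H; move: (inv_swap p s Hx Hy); rewrite H.
case: (boolP (canon pu pw pS z)) => Hc; first by exists z; split.
have [p [x [y [s [E Hr]]]]] := not_sorted_adj Hc.
move: Hr; rewrite negbK => Hs; have /and5P[Hx Hy _ _ _] := Hs.
have Hlt := inv_swap p s Hx Hy.
have Hle : invc (p ++ y :: x :: s) < n.+1 by apply: leq_trans Hlt _; rewrite -E.
have [z' [K1 K2 K3]] := IH (p ++ y :: x :: s) Hle.
exists z'; split.
- apply: perm_trans K1; rewrite E perm_cat2l.
  by apply/permP => a /=; lia.
- by move=> a Ha; rewrite (K2 _ Ha) E (filter_swap p s (Ha _ _ Hs)).
- exact: K3.
Qed.

Lemma commute_lem (T : eqType) (P : pred T) (P1 R1 R2 : seq T) b m :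
  filter P (P1 ++ b :: R1) = filter P (b :: R2) -> b \notin P1 -> m \in P1 ->
  P m -> P b -> False.
Proof.
move=> E Hb Hm Pm Pb; move: E; rewrite filter_cat /= Pb.
have Hmf : m \in filter P P1 by rewrite mem_filter Pm Hm.
case F: (filter P P1) => [|h t] /=; first by rewrite F in Hmf.
move=> [Eh _]; have : h \in filter P P1 by rewrite F mem_head.
by rewrite mem_filter Eh (negbTE Hb) andbF.
Qed.

Lemma mem_tail (T : eqType) (l1 l : T) t : l1 \notin t ->
  (l \in t) = (l != l1) && (l \in l1 :: t).
Proof.
move=> H; rewrite in_cons; case: eqVneq => [->|] //=.
by rewrite (negbTE H).
Qed.

Lemma filter_tail (T : eqType) (P : pred T) l t1 t2 :
  filter P (l :: t1) = filter P (l :: t2) -> filter P t1 = filter P t2.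
Proof. by rewrite /=; case: (P l) => // -[]. Qed.

Lemma last_split (T : eqType) (l : T) (p : seq T) :
  exists p0 m, l :: p = rcons p0 m.
Proof.
by exists (belast l p), (last l p); rewrite lastI.
Qed.

Lemma canon_unique M N (pu pw pS : pred (letter M N)) (z1 z2 : seq (letter M N)) :
  uniq z1 -> uniq z2 -> z1 =i z2 ->
  filter pu z1 = filter pu z2 -> filter pw z1 = filter pw z2 ->
  filter pS z1 = filter pS z2 ->
  {in z1, forall l, isA l -> pu l} -> {in z1, forall l, isX l -> pw l} ->
  canon pu pw pS z1 -> canon pu pw pS z2 -> z1 = z2.
Proof.
elim: z1 z2 => [|l1 t1 IH] [|l2 t2] //.
- by move=> _ _ /(_ l2); rewrite mem_head.
- by move=> _ _ /(_ l1); rewrite mem_head.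
move=> U1 U2 Hmem Fu Fw FS HA HX C1 C2.
have /andP[n1 u1] := U1; have /andP[n2 u2] := U2.
case: (eqVneq l1 l2) => [E|ne].
  subst l2; congr (_ :: _); apply: IH => //.
  - by move=> l; rewrite (mem_tail l n1) (mem_tail l n2) Hmem.
  - exact: filter_tail Fu.
  - exact: filter_tail Fw.
  - exact: filter_tail FS.
  - by move=> l Hl; apply: HA; rewrite in_cons Hl orbT.
  - by move=> l Hl; apply: HX; rewrite in_cons Hl orbT.
  - exact: path_sorted C1.
  - exact: path_sorted C2.
exfalso.
have Hl2 : l2 \in t1.
  by rewrite (mem_tail l2 n1) eq_sym ne Hmem mem_head.
have Hl1 : l1 \in t2.
  by rewrite (mem_tail l1 n2) ne -Hmem mem_head.
have [p [r E1]] := mem_split Hl2.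
have [p' [r' E2]] := mem_split Hl1.
have nb1 : l2 \notin l1 :: p.
  by move: U1; rewrite E1 -cat_cons => /uniq_mid /andP[]; rewrite mem_cat negb_or => /andP[].
have nb2 : l1 \notin l2 :: p'.
  by move: U2; rewrite E2 -cat_cons => /uniq_mid /andP[]; rewrite mem_cat negb_or => /andP[].
have Z1 : l1 :: t1 = (l1 :: p) ++ l2 :: r by rewrite E1.
have Z2 : l2 :: t2 = (l2 :: p') ++ l1 :: r' by rewrite E2.
have com1 : forall P : pred (letter M N), filter P (l1 :: t1) = filter P (l2 :: t2) ->
    forall m, m \in l1 :: p -> ~~ (P m && P l2).
  move=> P FP m Hm; apply/negP => /andP[Pm Pb].
  apply: (@commute_lem _ P (l1 :: p) r t2 l2 m) => //; by rewrite -Z1.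
have com2 : forall P : pred (letter M N), filter P (l1 :: t1) = filter P (l2 :: t2) ->
    forall m, m \in l2 :: p' -> ~~ (P m && P l1).
  move=> P FP m Hm; apply/negP => /andP[Pm Pb].
  apply: (@commute_lem _ P (l2 :: p') r' t1 l1 m) => //; by rewrite -Z2.
have inz1 : forall m, m \in l1 :: p -> m \in l1 :: t1.
  by move=> m Hm; rewrite Z1 mem_cat Hm.
have inz2 : forall m, m \in l2 :: p' -> m \in l1 :: t1.
  by move=> m Hm; rewrite Hmem Z2 mem_cat Hm.
have l2z : l2 \in l1 :: t1 by rewrite in_cons Hl2 orbT.
have l1z : l1 \in l1 :: t1 by rewrite mem_head.
case A2: (isA l2).
  have [p0 [m Em]] := last_split l1 p.
  have Hm : m \in l1 :: p by rewrite Em mem_rcons mem_head.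
  have pu2 : pu l2 := HA _ l2z A2.
  have npum : ~~ pu m by move: (com1 _ Fu m Hm); rewrite pu2 andbT.
  have Xm : isX m.
    by rewrite -[isX m]negbK -isAX; apply: contra npum => Am; apply: HA => //; apply: inz1.
  have pwm : pw m := HX _ (inz1 _ Hm) Xm.
  have npw2 : ~~ pw l2 by move: (com1 _ Fw m Hm); rewrite pwm.
  have nS := com1 _ FS m Hm.
  have : ~~ swp pu pw pS m l2.
    apply: (sorted_adj C1 (p := p0) (s := r)).
    by rewrite Z1 Em cat_rcons.
  by rewrite /swp Xm A2 npum npw2 nS.
case A1: (isA l1).
  have [p0 [m Em]] := last_split l2 p'.
  have Hm : m \in l2 :: p' by rewrite Em mem_rcons mem_head.
  have pu1 : pu l1 := HA _ l1z A1.
  have npum : ~~ pu m by move: (com2 _ Fu m Hm); rewrite pu1 andbT.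
  have Xm : isX m.
    by rewrite -[isX m]negbK -isAX; apply: contra npum => Am; apply: HA => //; apply: inz2.
  have pwm : pw m := HX _ (inz2 _ Hm) Xm.
  have npw1 : ~~ pw l1 by move: (com2 _ Fw m Hm); rewrite pwm.
  have nS := com2 _ FS m Hm.
  have : ~~ swp pu pw pS m l1.
    apply: (sorted_adj C2 (p := p0) (s := r')).
    by rewrite Z2 Em cat_rcons.
  by rewrite /swp Xm A1 npum npw1 nS.
have X1 : isX l1 by rewrite -[isX l1]negbK -isAX A1.
have X2 : isX l2 by rewrite -[isX l2]negbK -isAX A2.
move: (com1 _ Fw l1 (mem_head _ _)).
by rewrite (HX _ l1z X1) (HX _ l2z X2).
Qed.

Lemma ind2 (T : Type) (P : seq T -> Prop) :
  P [::] -> (forall x, P [:: x]) ->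
  (forall x y s, P s -> P (y :: s) -> P (x :: y :: s)) -> forall z, P z.
Proof.
move=> H0 H1 H2 z.
suff: P z /\ forall x, P (x :: z) by case.
elim: z => [|y s [IH1 IH2]]; first by split.
by split => // x; apply: H2.
Qed.

Definition freeL M N (pu pw : pred (letter M N)) (l : letter M N) :=
  (isA l && ~~ pw l) || (isX l && ~~ pu l).

Definition fp M N (pu pw : pred (letter M N)) (x y : letter M N) :=
  [&& isX x, isA y, ~~ pu x & ~~ pw y].

Fixpoint cs M N (pu pw : pred (letter M N)) (z : seq (letter M N)) : seq (letter M N) :=
  match z with
  | x :: t => match t with
              | y :: s => if fp pu pw x y then x :: y :: cs pu pw s else cs pu pw t
              | [::] => [::]
              end
  | [::] => [::]
  end.

Lemma cs_subseq M N (pu pw : pred (letter M N)) z : subseq (cs pu pw z) z.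
Proof.
elim/ind2: z => [//|x|x y s IH1 IH2]; first by rewrite /= ?sub0seq.
rewrite [cs _ _ _]/=; case: ifP => _.
  by rewrite [subseq _ _]/= eqxx [subseq _ _]/= eqxx.
apply: subseq_trans IH2 _; exact: subseq_cons.
Qed.

Lemma cs_count M N (pu pw : pred (letter M N)) z :
  count (@isA M N) (cs pu pw z) = count (@isX M N) (cs pu pw z).
Proof.
elim/ind2: z => [//|x//|x y s IH1 IH2].
rewrite [cs _ _ _]/=; case: ifP => // /and4P[Hx Hy _ _].
have ey : isX y = false by rewrite -[isX y]negbK -isAX Hy.
have ex : isA x = false by rewrite isAX Hx.
by rewrite /= Hx Hy ex ey IH1.
Qed.

Lemma cs_prop M N (pu pw pS : pred (letter M N)) z :
  canon pu pw pS z -> forall l, l \in cs pu pw z -> pS l && freeL pu pw l.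
Proof.
elim/ind2: z => [//|x//|x y s IH1 IH2] C l.
rewrite [cs _ _ _]/=; case: ifP => [Hf|_]; last first.
  by apply: IH2; exact: path_sorted C.
have H := sorted_adj C (p := [::]) (x := x) (y := y) (s := s) (erefl _).
move: Hf => /and4P[Xx Ay nux nwy].
move: H; rewrite /swp Xx Ay nux nwy /= negbK => /andP[Sx Sy].
rewrite /freeL !in_cons => /orP[/eqP->|/orP[/eqP->|Hl]].
- by rewrite Sx Xx nux orbT.
- by rewrite Sy Ay nwy.
- by apply: IH1 => //; exact: path_sorted (path_sorted C).
Qed.

Lemma cs_adj M N (pu pw : pred (letter M N)) z :
  forall p x y s, z = p ++ x :: y :: s -> fp pu pw x y ->
  (x \in cs pu pw z) && (y \in cs pu pw z).
Proof.
elim/ind2: z => [|a|a b t IH1 IH2] p x y s.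
- by case: p.
- by case: p => [|? [|? ?]].
case: p => [[-> -> ->] Hf|c p' [Ec E]]; first by rewrite /= Hf !in_cons !eqxx orbT.
rewrite [cs _ _ _]/=; case: ifP => Hab Hf; last exact: IH2 E Hf.
case: p' E => [|d p''] /=.
  case=> Eb _; subst.
  move: Hab Hf => /and4P[_ A1 _ _] /and4P[X1 _ _ _].
  by rewrite isAX X1 in A1.
move=> [_ Et]; have /andP[H1 H2] := IH1 _ _ _ _ Et Hf.
by rewrite !in_cons H1 H2 !orbT.
Qed.

Definition CD M N (u w v z : seq (letter M N)) :=
  Tw u v w z /\ canon (inS u) (inS w) (inS v) z.

Lemma CD_exists M N (u v w : shuffle M N) : wle u v -> wle v w ->
  exists z, CD (val u) (val w) (val v) z.
Proof.
move=> H1 H2; have [z0 [F1 F2 F3 F4]] := wle_T3 H1 H2.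
have [z [P K C]] := normalize (inS (val u)) (inS (val w)) (inS (val v)) (leqnn (invc z0)).
exists z; split => //; split.
- by rewrite K // => x y /and5P[_ _ nu _ _]; rewrite negb_and nu.
- by rewrite K // => x y /and5P[_ _ _ _ ->].
- by rewrite K // => x y /and5P[_ _ _ nw _]; rewrite negb_and nw orbT.
- by move=> l; rewrite -(perm_mem P); apply: F4.
Qed.

Lemma CD_shuffle M N (u w : shuffle M N) v z : CD (val u) (val w) v z -> is_shuffle z.
Proof.
move=> [[F1 F2 F3 F4] _].
apply: (shuffle_of (valP u) (valP w)).
- rewrite -{1}F1 -filter_predI; apply: eq_in_filter => l Hl /=.
  by case: (F4 l Hl) => HA _; case E: (isA l) => //=; rewrite /inS HA.
- rewrite -{1}F3 -filter_predI; apply: eq_in_filter => l Hl /=.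
  by case: (F4 l Hl) => _ HX; case E: (isX l) => //=; rewrite /inS HX.
Qed.

Definition newS M N (u w v z : seq (letter M N)) (l : letter M N) : bool :=
  if l \in cs (inS u) (inS w) z then l \in v
  else if freeL (inS u) (inS w) l then l \notin v else l \in v.

Definition psiw M N (u w v z : seq (letter M N)) := filter (newS u w v z) z.

Lemma letter_bool (a x pu pw S c : bool) : x = ~~ a -> (a -> pu) -> (x -> pw) ->
  (a && pw -> S) -> (x && pu -> S) -> (c -> S && ((a && ~~pw) || (x && ~~pu))) ->
  let n := if c then S else if (a && ~~ pw) || (x && ~~ pu) then ~~ S else S in
  (x && n) + (x && S) + (a && pu) + (a && pw) + (a && c) =
  (a && n) + (a && S) + (x && pu) + (x && pw) + (x && c).
Proof.
by move=> ->; case: a; case: pu; case: pw; case: S; case: c => //= H1 H2 H3 H4 H5;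
  try (by move: (H5 isT)); try (by move: (H1 isT)); try (by move: (H2 isT));
  try (by move: (H3 isT)); try (by move: (H4 isT)).
Qed.

Lemma count_sum5 (T : eqType) (a1 a2 a3 a4 a5 b1 b2 b3 b4 b5 : pred T) (z : seq T) :
  {in z, forall l, a1 l + a2 l + a3 l + a4 l + a5 l = b1 l + b2 l + b3 l + b4 l + b5 l} ->
  count a1 z + count a2 z + count a3 z + count a4 z + count a5 z =
  count b1 z + count b2 z + count b3 z + count b4 z + count b5 z.
Proof.
elim: z => //= l z IH H.
have H1 := H l (mem_head _ _).
have H2 : {in z, forall l, a1 l + a2 l + a3 l + a4 l + a5 l = b1 l + b2 l + b3 l + b4 l + b5 l}.
  by move=> l' Hl'; apply: H; rewrite in_cons Hl' orbT.
have := IH H2; lia.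
Qed.

Lemma newS_nonfree M N (u w v z : seq (letter M N)) l :
  ~~ freeL (inS u) (inS w) l -> newS u w v z l = (l \in v).
Proof. by rewrite /newS => /negbTE ->; case: ifP. Qed.

Lemma psi_shuffle M N (u w : shuffle M N) (v z : seq (letter M N)) :
  CD (val u) (val w) v z -> is_shuffle (psiw (val u) (val w) v z).
Proof. move=> H; apply: shuffle_subseq (CD_shuffle H) _; exact: filter_subseq. Qed.

Lemma isA_or_X M N (l : letter M N) : isA l || isX l.
Proof. by case: l. Qed.

Lemma psi_le1 M N (u w v s : shuffle M N) z :
  wle u v -> wle v w -> CD (val u) (val w) (val v) z ->
  val s = psiw (val u) (val w) (val v) z -> wle u s.
Proof.
move=> H1 H2 [[F1 F2 F3 F4] C] Es.
have [_ Huv] := wle_sub H1.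
apply: (@wle_of_filters _ _ u s z (inS (val u)) (newS (val u) (val w) (val v) z)) => //.
- move=> l Hl; rewrite /inS => Hu; case A: (isA l) => //.
  have X : isX l by rewrite -[isX l]negbK -isAX A.
  rewrite newS_nonfree; first by rewrite (Huv l Hu X).
  by rewrite /freeL A X /= /inS Hu.
- move=> l Hl _; rewrite /inS => Hnu; case X: (isX l) => //.
  have A : isA l by rewrite isAX X.
  by case: (F4 l Hl) => HA _; move: Hnu; rewrite (HA A).
Qed.

Lemma psi_le2 M N (u w v s : shuffle M N) z :
  wle u v -> wle v w -> CD (val u) (val w) (val v) z ->
  val s = psiw (val u) (val w) (val v) z -> wle s w.
Proof.
move=> H1 H2 [[F1 F2 F3 F4] C] Es.
have [Hvw _] := wle_sub H2.
apply: (@wle_of_filters _ _ s w z (newS (val u) (val w) (val v) z) (inS (val w))) => //.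
- move=> l Hl _; rewrite /inS => Hnw; case A: (isA l) => //.
  have X : isX l by rewrite -[isX l]negbK -isAX A.
  by case: (F4 l Hl) => _ HX; move: Hnw; rewrite (HX X).
- move=> l Hl; rewrite /inS => Hw; case X: (isX l) => //.
  have A : isA l by rewrite isAX X.
  rewrite newS_nonfree; first by rewrite (Hvw l Hw A).
  by rewrite /freeL A X /= /inS Hw.
Qed.

Lemma mem_psiw M N (u w v z : seq (letter M N)) l : l \in z ->
  (l \in psiw u w v z) = newS u w v z l.
Proof. by move=> Hl; rewrite mem_filter Hl andbT. Qed.

Lemma psi_CD M N (u w v : shuffle M N) z :
  CD (val u) (val w) (val v) z ->
  CD (val u) (val w) (psiw (val u) (val w) (val v) z) z.
Proof.
move=> [[F1 F2 F3 F4] C]; split; first split => //.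
  by rewrite /psiw; apply: eq_in_filter => l Hl; rewrite /inS mem_psiw.
apply: adj_sorted => p x y s E.
rewrite /swp; case F: (fp (inS (val u)) (inS (val w)) x y); last first.
  by move: F; rewrite /fp; case: (isX x); case: (isA y); case: (inS _ x); case: (inS _ y).
have /andP[cx cy] := cs_adj E F.
have Hx : x \in z by rewrite E mem_cat !in_cons eqxx orbT.
have Hy : y \in z by rewrite E mem_cat !in_cons eqxx !orbT.
have /andP[Sx _] := cs_prop C cx.
have /andP[Sy _] := cs_prop C cy.
rewrite /inS in Sx Sy cx cy; rewrite /inS !mem_psiw // /newS cx cy Sx Sy /= andbF.
by rewrite !andbF.
Qed.

Lemma psi_invol M N (u w v : shuffle M N) z :
  CD (val u) (val w) (val v) z ->
  psiw (val u) (val w) (psiw (val u) (val w) (val v) z) z = val v.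
Proof.
move=> [[F1 F2 F3 F4] C]; rewrite -[RHS]F2 /psiw.
apply: eq_in_filter => l Hl.
rewrite {1}/newS !mem_psiw // /newS /inS.
by case: (l \in cs _ _ z) => //; case: (freeL _ _ l) => //; rewrite negbK.
Qed.

Lemma rho_eq M N (t : shuffle M N) : rho t = M - count (@isA M N) (val t) + count (@isX M N) (val t).
Proof. by []. Qed.

Lemma psi_rank M N (u w v s : shuffle M N) z :
  wle u v -> wle v w -> CD (val u) (val w) (val v) z ->
  val s = psiw (val u) (val w) (val v) z -> rho s + rho v = rho u + rho w.
Proof.
move=> H1 H2 HC Es; have Hz := CD_shuffle HC.
case: HC => [[F1 F2 F3 F4] C].
have [_ Huv] := wle_sub H1.
have [Hvw _] := wle_sub H2.
set c := inS (cs (inS (val u)) (inS (val w)) z).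
have Hcs : cs (inS (val u)) (inS (val w)) z = filter c z.
  by apply/subseq_uniqP; [case/and3P: Hz | exact: cs_subseq].
have Ccnt := cs_count (inS (val u)) (inS (val w)) z.
rewrite Hcs !count_filter in Ccnt.
have E := @count_sum5 _
  (predI (@isX M N) (newS (val u) (val w) (val v) z)) (predI (@isX M N) (inS (val v)))
  (predI (@isA M N) (inS (val u))) (predI (@isA M N) (inS (val w))) (predI (@isA M N) c)
  (predI (@isA M N) (newS (val u) (val w) (val v) z)) (predI (@isA M N) (inS (val v)))
  (predI (@isX M N) (inS (val u))) (predI (@isX M N) (inS (val w))) (predI (@isX M N) c) z.
rewrite -!count_filter -/(psiw _ _ _ _) -Es F1 F2 F3 in E.
have Hle := countA_le (valP s); have Hlv := countA_le (valP v).
have Hlu := countA_le (valP u); have Hlw := countA_le (valP w).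
rewrite !rho_eq.
suff HH : count (@isX M N) (val s) + count (@isX M N) (val v) + count (@isA M N) (val u) +
  count (@isA M N) (val w) + count (@isA M N) (filter c z) =
  count (@isA M N) (val s) + count (@isA M N) (val v) + count (@isX M N) (val u) +
  count (@isX M N) (val w) + count (@isX M N) (filter c z).
  rewrite -!count_filter in Ccnt.
  move: HH Ccnt Hle Hlv Hlu Hlw.
  set a1 := count (@isA M N) (val s); set a2 := count (@isA M N) (val v).
  set a3 := count (@isA M N) (val u); set a4 := count (@isA M N) (val w).
  set x1 := count (@isX M N) (val s); set x2 := count (@isX M N) (val v).
  set x3 := count (@isX M N) (val u); set x4 := count (@isX M N) (val w).
  set c1 := count (@isA M N) (filter c z); set c2 := count (@isX M N) (filter c z).
  lia.
apply: E => l Hl /=.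
have [HA HX] := F4 l Hl.
have := @letter_bool (isA l) (isX l) (l \in val u) (l \in val w) (l \in val v) (c l).
rewrite /newS /freeL /inS /c; apply.
- by rewrite isAX negbK.
- exact: HA.
- exact: HX.
- by move=> /andP[A Hw]; apply: Hvw.
- by move=> /andP[X Hu]; apply: Huv.
- move=> Hc; have := cs_prop C Hc; by rewrite /freeL.
Qed.

Definition Zof M N (u w v : shuffle M N) : seq (letter M N) :=
  epsilon (inhabits [::]) (fun z => CD (val u) (val w) (val v) z).

Definition psi M N (u w v : shuffle M N) : shuffle M N :=
  insubd v (psiw (val u) (val w) (val v) (Zof u w v)).

Lemma Zof_spec M N (u w v : shuffle M N) : in_interval u w v ->
  CD (val u) (val w) (val v) (Zof u w v).
Proof.
move=> [H1 H2]; rewrite /Zof; apply: epsilon_spec; exact: CD_exists.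
Qed.

Lemma psi_val M N (u w v : shuffle M N) : in_interval u w v ->
  val (psi u w v) = psiw (val u) (val w) (val v) (Zof u w v).
Proof.
move=> H; rewrite /psi insubdK //; exact: psi_shuffle (Zof_spec H).
Qed.

Lemma CD_mem M N (u w v : shuffle M N) z : CD (val u) (val w) (val v) z ->
  z =i (val u ++ val w).
Proof.
move=> [[F1 F2 F3 F4] _] l; rewrite mem_cat; apply/idP/idP.
  move=> Hl; have [HA HX] := F4 l Hl; case/orP: (isA_or_X l) => [/HA ->//|/HX ->].
  by rewrite orbT.
by case/orP => H; [apply: mem_of_filter F1 H | apply: mem_of_filter F3 H].
Qed.

Lemma psi_spec M N (u w v : shuffle M N) : in_interval u w v ->
  [/\ in_interval u w (psi u w v), psi u w (psi u w v) = v &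
      rho (psi u w v) + rho v = rho u + rho w].
Proof.
move=> Hv; have HC := Zof_spec Hv; have [H1 H2] := Hv.
have Ev := psi_val Hv.
have Hi : in_interval u w (psi u w v).
  by split; [apply: psi_le1 H1 H2 HC Ev | apply: psi_le2 H1 H2 HC Ev].
split => //; last exact: psi_rank H1 H2 HC Ev.
have HC' := Zof_spec Hi.
have HC2 : CD (val u) (val w) (val (psi u w v)) (Zof u w v) by rewrite Ev; exact: psi_CD.
have EZ : Zof u w (psi u w v) = Zof u w v.
  have [[F1 F2 F3 F4] C1] := HC'; have [[G1 G2 G3 G4] C2] := HC2.
  apply: (canon_unique (pu := inS (val u)) (pw := inS (val w)) (pS := inS (val (psi u w v)))) => //.
  - by case/and3P: (CD_shuffle HC').
  - by case/and3P: (CD_shuffle HC2).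
  - by move=> l; rewrite (CD_mem HC') (CD_mem HC2).
  - by rewrite F1 G1.
  - by rewrite F3 G3.
  - by rewrite F2 G2.
  - by move=> l Hl; case: (F4 l Hl).
  - by move=> l Hl; case: (F4 l Hl).
apply: val_inj; rewrite (psi_val Hi) EZ Ev.
exact: psi_invol.
Qed.

Theorem corollary3p7 (M N : nat) (u w : shuffle M N) (i : nat) :
  wlt u w ->
  exists f : {v : shuffle M N | in_interval u w v /\ rho v = rho u + i} ->
             {v : shuffle M N | in_interval u w v /\ rho v + i = rho w},
    bijective f.
Proof.
move=> _.
have Hf : forall v : {v : shuffle M N | in_interval u w v /\ rho v = rho u + i},
    in_interval u w (psi u w (sval v)) /\ rho (psi u w (sval v)) + i = rho w.
  move=> [v [Hv Hr]] /=; have [K1 K2 K3] := psi_spec Hv; split => //; lia.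
have Hg : forall v : {v : shuffle M N | in_interval u w v /\ rho v + i = rho w},
    in_interval u w (psi u w (sval v)) /\ rho (psi u w (sval v)) = rho u + i.
  move=> [v [Hv Hr]] /=; have [K1 K2 K3] := psi_spec Hv; split => //; lia.
exists (fun v => exist _ (psi u w (sval v)) (Hf v)).
exists (fun v => exist _ (psi u w (sval v)) (Hg v)).
- move=> [v [Hv Hr]]; apply: eq_sig_hprop => /=; first by move=> *; apply: proof_irrelevance.
  by case: (psi_spec Hv).
- move=> [v [Hv Hr]]; apply: eq_sig_hprop => /=; first by move=> *; apply: proof_irrelevance.
  by case: (psi_spec Hv).
Qed.
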